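(* Suppose that $n\ge 6$ is even and that $H$ is a $3$-uniform hypergraph on $n$ vertices. If for every vertex $v$ of $H$ the hypergraph $H\setminus v$ is isomorphic to $B_{n-1}$, then $H\cong B_n$.
   Context: $H\setminus v$ is obtained by deleting $v$ and all edges containing it. For $m\ge 1$, $B_m$ is the $3$-uniform hypergraph on $m$ vertices with a partition $V=X\cup Y$ into disjoint sets with $||X|-|Y||\le 1$ whose edges are exactly the triples meeting both $X$ and $Y$. *)

(* Defs.v *)
From mathcomp Require Import all_boot.
Set Implicit Arguments. Unset Strict Implicit. Unset Printing Implicit Defensive.

Definition uniform3 (T : finType) (E : {set {set T}}) : Prop :=
  forall e, e \in E -> #|e| = 3.

Definition hiso (T1 T2 : finType) (E1 : {set {set T1}}) (E2 : {set {set T2}}) : Prop :=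
  exists f : T1 -> T2, bijective f /\ forall e : {set T1}, (e \in E1) = (f @: e \in E2).

Definition vdel_type (T : finType) (v : T) : finType := {x : T | x != v}.

Definition hdel (T : finType) (E : {set {set T}}) (v : T) : {set {set vdel_type v}} :=
  [set e : {set vdel_type v} | [set val x | x in e] \in E].

(* B_m on vertex set 'I_m, with X = {i < m/2} and Y its complement
   (so ||X| - |Y|| <= 1); edges are triples meeting both X and Y. *)
Definition B_X (m : nat) : {set 'I_m} := [set i : 'I_m | i < m./2].

Definition B (m : nat) : {set {set 'I_m}} :=
  [set e : {set 'I_m} | [&& #|e| == 3, e :&: B_X m != set0 & e :\: B_X m != set0]].

(* Main.v *)
Require Import Defs.
From mathcomp Require Import all_boot zify.

Lemma sub_imset_iff (T1 T2 : finType) (g : T1 -> T2) (X : {set T1}) (Y : {set T2}) (e : {set T1}) :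
  (forall x, (g x \in Y) = (x \in X)) -> (g @: e \subset Y) = (e \subset X).
Proof.
move=> hg; apply/subsetP/subsetP => h x.
- by move=> xe; rewrite -hg; apply: h; apply: imset_f.
- by case/imsetP => y ye ->; rewrite hg; exact: h.
Qed.

Lemma sub_imset_iffC (T1 T2 : finType) (g : T1 -> T2) (X : {set T1}) (Y : {set T2}) (e : {set T1}) :
  (forall x, (g x \in Y) = (x \in X)) -> (g @: e \subset ~: Y) = (e \subset ~: X).
Proof. by move=> hg; apply: sub_imset_iff => x; rewrite !inE hg. Qed.

Lemma card_BX m : #|B_X m| = m./2.
Proof.
have le : m./2 <= m by rewrite -{2}(odd_double_half m) -addnn; lia.
have -> : B_X m = [set widen_ord le i | i in 'I_(m./2)].
  apply/setP => i; rewrite inE; apply/idP/imsetP.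
  - by move=> lt; exists (Ordinal lt) => //; apply: val_inj.
  - by case=> j _ ->; rewrite /= ltn_ord.
rewrite card_imset ?card_ord //.
by move=> a b /(congr1 val) /= h; apply: val_inj.
Qed.

Lemma swapex (T : finType) m : forall A B : {set T}, #|A :\: B| = m -> #|A| = #|B| ->
  exists g : T -> T, bijective g /\ forall x, (g x \in B) = (x \in A).
Proof.
elim: m => [|m IH] A B hm hc.
  have sAB : A \subset B by rewrite -setD_eq0 -cards_eq0 hm.
  have eAB := subset_cardP hc sAB.
  by exists id; split; [exists id | move=> x; rewrite eAB].
have : 0 < #|A :\: B| by rewrite hm.
rewrite card_gt0 => /set0Pn [x]; rewrite inE => /andP [xB xA].
have [y yBA] : exists y, y \in B :\: A.
  apply/set0Pn; rewrite -cards_eq0 cardsD; apply/eqP => h.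
  have sBA : B \subset A by rewrite -setD_eq0 -cards_eq0 cardsD h.
  have eBA := subset_cardP (esym hc) sBA.
  by move: xB; rewrite eBA xA.
move: yBA; rewrite inE => /andP [yA yB].
have xy : x != y by apply: contraNneq xB => ->.
pose A' := y |: (A :\ x).
have hm' : #|A' :\: B| = m.
  have -> : A' :\: B = (A :\: B) :\ x.
    apply/setP => z; rewrite !inE; have [->|zy] := eqVneq z y; first by rewrite yB eq_sym xy (negbTE yA).
    by rewrite /=; case: (z == x); case: (z \in B); case: (z \in A).
  move: hm; rewrite (cardsD1 x (A :\: B)) !inE xB xA /=; lia.
have hc' : #|A'| = #|B|.
  rewrite cardsU1 !inE (negbTE yA) andbF /= -hc (cardsD1 x A) xA; lia.
have [g' [bg' hg']] := IH A' B hm' hc'.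
pose sw := fun z => if z == x then y else if z == y then x else z.
have swK : involutive sw.
  move=> z; rewrite /sw; have [->|zx] := eqVneq z x; first by rewrite eqxx eq_sym (negbTE xy).
  have [->|zy] := eqVneq z y; first by rewrite eqxx.
  by rewrite (negbTE zx) (negbTE zy).
exists (g' \o sw); split; first exact: bij_comp bg' (inv_bij swK).
move=> z; rewrite /= hg' /sw !inE; have [->|zx] := eqVneq z x; first by rewrite eqxx xA.
have [->|zy] := eqVneq z y; first by rewrite eqxx /= (negbTE xy) (negbTE yA); idtac.
by rewrite (negbTE zy) zx.
Qed.

Lemma hstruct n (H : {set {set 'I_n}}) (w : 'I_n) : hiso (hdel H w) (B n.-1) ->
 exists P : {set 'I_n}, [/\ w \notin P, #|P| = (n.-1)./2 &
   forall T : {set 'I_n}, #|T| = 3 -> w \notin T ->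
     (T \in H) = ~~ (T \subset P) && ~~ (T \subset ~: P)].
Proof.
case=> f [fb fe].
have finj := bij_inj fb.
pose X := B_X n.-1.
pose pre := f @^-1: X.
pose P := [set val x | x in pre].
have memP : forall x : vdel_type w, (val x \in P) = (x \in pre).
  by move=> x; rewrite mem_imset //; exact: val_inj.
exists P; split.
- apply/imsetP => -[x _ ex]; by move: (valP x); rewrite -ex eqxx.
- rewrite card_imset; last exact: val_inj.
  rewrite -card_BX; have [g fg gf] := fb.
  have eX : f @: pre = X.
    apply/setP => y; apply/imsetP/idP => [[x xp ->]|yX].
    + by move: xp; rewrite inE.
    + by exists (g y); [rewrite inE gf | rewrite gf].
  by rewrite -/X -eX card_imset.
move=> T T3 wT.
pose e := [set x : vdel_type w | val x \in T].
have Te : T = [set val x | x in e].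
  apply/setP => t; apply/idP/imsetP => [tT|[x xe ->]].
  + have tw : t != w by apply: contraNneq wT => <-.
    by exists (exist _ t tw); rewrite ?inE.
  + by move: xe; rewrite inE.
have : (T \in H) = (e \in hdel H w) by rewrite /hdel inE {1}Te.
move=> ->; rewrite fe /B inE.
have hf : forall x, (f x \in X) = (x \in pre).
  by move=> x; rewrite [in RHS]inE.
rewrite card_imset // setI_eq0 setD_eq0.
rewrite (_ : #|e| = 3); last by rewrite -T3 Te card_imset //; exact: val_inj.
rewrite eqxx /= disjoint_subset.
have -> : (f @: e \subset [predC X]) = (f @: e \subset ~: X).
  by apply: eq_subset_r => y; rewrite !inE.
rewrite (@sub_imset_iffC _ _ _ _ _ e hf) (@sub_imset_iff _ _ _ _ _ e hf) Te.
rewrite (@sub_imset_iffC _ _ _ _ _ e memP) (@sub_imset_iff _ _ _ _ _ e memP).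
by rewrite andbC.
Qed.

Lemma sub_U1 (T:finType) (v:T) (S R : {set T}) : v \notin R -> (R \subset v |: S) = (R \subset S).
Proof.
move=> vR; apply/subsetP/subsetP => h t tR; have := h t tR;
have tv : t != v by apply: contraNneq vR => <-.
all: by rewrite !inE (negbTE tv).
Qed.

Lemma sub_CU1 (T:finType) (v:T) (S R : {set T}) : v \notin R -> (R \subset ~: (v |: S)) = (R \subset ~: S).
Proof.
move=> vR; apply/subsetP/subsetP => h t tR; have := h t tR;
have tv : t != v by apply: contraNneq vR => <-.
all: by rewrite !inE (negbTE tv).
Qed.

Lemma sub_D1 (T:finType) (a:T) (S R : {set T}) : a \notin R -> (R \subset S :\ a) = (R \subset S).
Proof.
move=> aR; apply/subsetP/subsetP => h t tR; have := h t tR;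
have ta : t != a by apply: contraNneq aR => <-.
all: by rewrite !inE ta.
Qed.

Theorem lemma2p5 (n : nat) (H : {set {set 'I_n}}) :
  6 <= n -> ~~ odd n -> uniform3 H ->
  (forall v : 'I_n, hiso (hdel H v) (B n.-1)) ->
  hiso H (B n).
Proof.
move=> n6 hodd hU hB.
set k := n./2.
have hn : n = k + k by rewrite addnn -{1}(odd_double_half n) (negbTE hodd).
have hk3 : 3 <= k by lia.
clearbody k.
have hn1 : (n.-1)./2 = k.-1.
  have e : n.-1 = (k.-1).*2.+1 by rewrite -addnn; lia.
  by rewrite e; exact: uphalf_double.
have n0 : 0 < n by lia.
pose v := Ordinal n0.
have [A [vA cA HA]] := @hstruct _ _ _ (hB v); rewrite hn1 in cA.
pose Bs := ~: A :\ v.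
have cB : #|Bs| = k.
  have h2 := cardsD1 v (~: A); have h1 := cardsC A; rewrite card_ord in h1.
  rewrite inE vA /= -/Bs in h2. set b := #|Bs| in h2 *. set c := #|~: A| in h1 h2. lia.
have memB : forall x, (x \in Bs) = (x != v) && (x \notin A) by move=> x; rewrite !inE.
have aRes : forall a, a \in A -> forall p : {set 'I_n}, #|p| = 2 -> a \notin p -> v \notin p ->
    (v |: p \in H) = ~~ (p \subset A).
  move=> a aA p p2 ap vp.
  have av : a != v by apply: contraNneq vA => <-.
  have [Pa [aPa cPa HPa]] := @hstruct _ _ _ (hB a); rewrite hn1 in cPa.
  have disj : forall x, x \in Bs -> x \notin Pa.
    move=> x xB; apply/negP => xP.
    have : ~~ (Bs \subset Pa) by apply/negP => /subset_leq_card; lia.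
    case/subsetPn => y yB yP.
    have : ~~ (Bs \subset [set x; y]).
      by apply/negP => /subset_leq_card; rewrite cards2; lia.
    case/subsetPn => z zB zxy.
    have xy : x != y by apply: contraTneq xP => ->.
    pose T := z |: [set x; y].
    have T3 : #|T| = 3 by rewrite cardsU1 zxy cards2 xy.
    have TB : T \subset Bs by rewrite subUset sub1set zB subUset !sub1set xB yB.
    have vT : v \notin T by apply/negP => /(subsetP TB); rewrite memB eqxx.
    have aT : a \notin T by apply/negP => /(subsetP TB); rewrite memB aA andbF.
    have := HA T T3 vT.
    rewrite (_ : T \subset ~: A); last first.
      by apply: subset_trans TB _; apply/subsetP => t; rewrite memB inE; case/andP.
    rewrite andbF HPa //.
    have -> : T \subset Pa = false.
      have yT : y \in T by rewrite !inE eqxx !orbT.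
      by apply/negbTE/negP => /subsetP /(_ y yT); apply/negP.
    have -> : T \subset ~: Pa = false.
      have xT : x \in T by rewrite !inE eqxx !orbT.
      by apply/negbTE/negP => /subsetP /(_ x xT); rewrite inE xP.
    by [].
  have ePa : Pa = v |: (A :\ a).
    apply/eqP; rewrite eqEcard; apply/andP; split.
    - apply/subsetP => t tP; rewrite !inE.
      have ta : t != a by apply: contraNneq aPa => <-.
      case: (eqVneq t v) => //= tv; rewrite ta /=.
      apply/negPn/negP => tA.
      by have := disj t; rewrite memB tv tA => /(_ isT); rewrite tP.
    - rewrite cardsU1 !inE (negbTE vA) andbF /= cPa.
      have := cardsD1 a A; rewrite aA cA.
 move=> h; set c := #|A :\ a| in h *; rewrite /= in h; lia.
  have avp : a \notin v |: p by rewrite !inE negb_or av.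
  have vp3 : #|v |: p| = 3 by rewrite cardsU1 vp p2.
  rewrite HPa // ePa.
  rewrite (_ : v |: p \subset ~: (v |: (A :\ a)) = false); last first.
    by apply/negbTE/negP => /subsetP /(_ v); rewrite !inE !eqxx /= => /(_ isT).
  by rewrite andbT subUset sub1set setU11 /= sub_U1 // sub_D1.
have k3 : #|A| = 2 -> (v |: A) \notin H.
  move=> A2.
  have : 0 < #|Bs| by lia.
  rewrite card_gt0 => /set0Pn [u uB].
  have [Pu [uPu cPu HPu]] := @hstruct _ _ _ (hB u); rewrite hn1 in cPu.
  pose Q := ~: Pu :\ u.
  have cQ : #|Q| = 3.
    have h2 := cardsD1 u (~: Pu); have h1 := cardsC Pu; rewrite card_ord in h1.
    rewrite inE uPu /= -/Q in h2. set b := #|Q| in h2 *. set c := #|~: Pu| in h1 h2.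
    set d := #|Pu| in h1 cPu. set d' := #|A| in A2 cA. lia.
  have uQ : u \notin Q by rewrite !inE eqxx.
  have QH : Q \notin H.
    by rewrite HPu // (_ : Q \subset ~: Pu) ?andbF //; apply/subsetP => t; rewrite !inE; case/andP.
  have vQ : v \in Q.
    apply/negPn/negP => vQ; move: QH; rewrite HA //.
    have -> : Q \subset A = false.
      by apply/negbTE/negP => /subset_leq_card; lia.
    have -> : Q \subset ~: A = false.
      apply/negbTE/negP => QA.
      have : Q \subset Bs :\ u.
        apply/subsetP => t tQ; rewrite !inE.
        have tu : t != u by apply: contraNneq uQ => <-.
        have tv : t != v by apply: contraNneq vQ => <-.
        by rewrite tu tv /=; have := subsetP QA t tQ; rewrite inE.
      move/subset_leq_card => h3; have h4 := cardsD1 u Bs; rewrite uB /= in h4.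
      set b := #|Bs :\ u| in h3 h4. set c := #|Bs| in h4 cB. set d := #|Q| in h3 cQ.
      set d' := #|A| in A2 cA. lia.
    by [].
  pose q := Q :\ v.
  have eQ : Q = v |: q by rewrite setD1K.
  have cq : #|q| = 2.
    have h := cardsD1 v Q; rewrite vQ cQ /= in h; rewrite /q; set b := #|Q :\ v| in h *; lia.
  have vq : v \notin q by rewrite !inE eqxx.
  have qA : q = A.
    case: (boolP (A \subset q)) => Aq.
    - by apply/eqP; rewrite eq_sym eqEcard Aq cq A2.
    - case/subsetPn: Aq => a aA aq.
      have := aRes a aA q cq aq vq; rewrite -eQ (negbTE QH) => /esym /negbFE qA.
      by apply/eqP; rewrite eqEcard qA cq A2.
  by rewrite -qA -eQ.
have Lv : forall p : {set 'I_n}, #|p| = 2 -> v \notin p -> (v |: p \in H) = ~~ (p \subset A).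
  move=> p p2 vp.
  case: (boolP (A \subset p)) => Ap.
  - have eAp : A = p by apply/eqP; rewrite eqEcard Ap p2 cA; lia.
    have A2 : #|A| = 2 by rewrite eAp.
    by rewrite -eAp subxx (negbTE (k3 A2)).
  - case/subsetPn: Ap => a aA ap; exact: aRes a aA p p2 ap vp.
pose X' := v |: A.
have char : forall T : {set 'I_n}, #|T| = 3 -> (T \in H) = ~~ (T \subset X') && ~~ (T \subset ~: X').
  move=> T T3.
  case: (boolP (v \in T)) => vT.
  - pose p := T :\ v.
    have eT : T = v |: p by rewrite setD1K.
    have p2 : #|p| = 2.
      have h := cardsD1 v T; rewrite vT T3 /= in h; rewrite /p; set b := #|T :\ v| in h *; lia.
    have vp : v \notin p by rewrite !inE eqxx.
    rewrite eT Lv // subUset sub1set setU11 /= sub_U1 //.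
    rewrite (_ : v |: p \subset ~: X' = false) ?andbT //.
    by apply/negbTE/negP => /subsetP /(_ v); rewrite !inE !eqxx /= => /(_ isT).
  - by rewrite HA // sub_U1 // sub_CU1.
have cX : #|X'| = #|B_X n| by rewrite card_BX cardsU1 vA cA; lia.
have [g [gb hg]] := @swapex _ _ X' (B_X n) erefl cX.
exists g; split => // e.
have ginj := bij_inj gb.
rewrite /B inE card_imset // setI_eq0 setD_eq0 disjoint_subset.
have -> : (g @: e \subset [predC B_X n]) = (g @: e \subset ~: B_X n).
  by apply: eq_subset_r => y; rewrite !inE.
rewrite (@sub_imset_iffC _ _ _ _ _ e hg) (@sub_imset_iff _ _ _ _ _ e hg).
case: (eqVneq #|e| 3) => e3 /=.
- by rewrite char // andbC.
- by apply/negbTE/negP => /hU h; rewrite h eqxx in e3.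
Qed.
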